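(* Let $s\ge2$ and let $\varrho\in C^s(\mathbb A,\mathbb R)$, $\mathbb A=\mathbb T^1\times[0,1]$, satisfy $\varrho(\xi,0)=\varrho(\xi,1)=0$ for all $\xi$, with $\|\varrho\|_{C^s}$ sufficiently small. Then there is a unique map $F_\varrho\in C^s(\mathbb A,\mathbb A)$ which fixes every point of $\{\eta=0\}$ and has the form $F_\varrho(\xi,\eta)=(\xi^+,\eta^+)$ with $$\xi^+=\xi+\eta+\varrho(\xi,\eta)\pmod1,\qquad \eta^+=\eta+\varrho(\xi,\eta)+\varrho(\xi^+,\eta^+).$$ Moreover $F_\varrho(\xi,1)=(\xi,1)$ and $F_\varrho^{-1}(\xi,\eta)=(\xi^-,\eta^-)$ with $\xi^-=\xi-\eta+\varrho(\xi,\eta)\pmod1$ and $\eta^-=\eta-\varrho(\xi,\eta)-\varrho(\xi^-,\eta^-)$.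
   Context: $\mathbb T^1=\mathbb R/\mathbb Z$; $(\xi,\eta)$ are the natural coordinates on $\mathbb A=\mathbb T^1\times[0,1]$. *)

(* Defs.v *)
From Stdlib Require Import Reals Lra Lia ZArith.
Open Scope R_scope.

Definition in01 (y : R) : Prop := 0 <= y <= 1.

(* Points of T^1 = R/Z are represented by real numbers; equality in T^1 is
   congruence modulo 1. *)
Definition eqmod1 (x y : R) : Prop := exists k : Z, x - y = IZR k.

(* The annulus A = T^1 x [0,1] is represented through its universal cover,
   the strip S = R x [0,1]. *)

Definition cont_strip (f : R -> R -> R) : Prop :=
  forall x y, in01 y ->
  forall eps, 0 < eps -> exists del, 0 < del /\
    forall x' y', in01 y' -> Rabs (x' - x) < del -> Rabs (y' - y) < del ->
      Rabs (f x' y' - f x y) < eps.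

Definition pdx (f : R -> R -> R) (x y d : R) : Prop :=
  forall eps, 0 < eps -> exists del, 0 < del /\
    forall h, h <> 0 -> Rabs h < del ->
      Rabs ((f (x + h) y - f x y) / h - d) < eps.

Definition pdy (f : R -> R -> R) (x y d : R) : Prop :=
  forall eps, 0 < eps -> exists del, 0 < del /\
    forall h, h <> 0 -> Rabs h < del -> in01 (y + h) ->
      Rabs ((f x (y + h) - f x y) / h - d) < eps.

Definition Cs_jet (s : nat) (f : R -> R -> R) (D : nat -> nat -> R -> R -> R)
  : Prop :=
  (forall x y, in01 y -> D 0%nat 0%nat x y = f x y) /\
  (forall i j, (i + j <= s)%nat -> cont_strip (D i j)) /\
  (forall i j, (i + j < s)%nat -> forall x y, in01 y ->
      pdx (D i j) x y (D (S i) j x y) /\ pdy (D i j) x y (D i (S j) x y)).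

Definition Cs (s : nat) (f : R -> R -> R) : Prop := exists D, Cs_jet s f D.

(* A map A -> A, given through a lift F : R x [0,1] -> R x [0,1]
   (first component = xi-coordinate lifted to R). *)
Definition Amap (F : R -> R -> R * R) : Prop :=
  forall x y, in01 y ->
    in01 (snd (F x y)) /\
    eqmod1 (fst (F (x + 1) y)) (fst (F x y)) /\
    snd (F (x + 1) y) = snd (F x y).

Definition Cs_Amap (s : nat) (F : R -> R -> R * R) : Prop :=
  Amap F /\ Cs s (fun x y => fst (F x y)) /\ Cs s (fun x y => snd (F x y)).

Definition Apt_eq (p q : R * R) : Prop :=
  eqmod1 (fst p) (fst q) /\ snd p = snd q.

Definition Amap_eq (F G : R -> R -> R * R) : Prop :=
  forall x y, in01 y -> Apt_eq (F x y) (G x y).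

(* A function on A = T^1 x [0,1]: 1-periodic in xi. *)
Definition periodic1 (rho : R -> R -> R) : Prop :=
  forall x y, in01 y -> rho (x + 1) y = rho x y.

Definition is_F (s : nat) (rho : R -> R -> R) (F : R -> R -> R * R) : Prop :=
  Cs_Amap s F /\
  (forall x, Apt_eq (F x 0) (x, 0)) /\
  (forall x y, in01 y ->
     eqmod1 (fst (F x y)) (x + y + rho x y) /\
     snd (F x y) = y + rho x y + rho (fst (F x y)) (snd (F x y))).

(* Main.v *)
Require Import Defs.
From Stdlib Require Import Reals Lra Lia ZArith.
From Stdlib Require Import Classical ClassicalEpsilon.
From Coquelicot Require Coquelicot.
Open Scope R_scope.

Definition LimG {I : Type} (N : R -> I -> Prop) (g : I -> R) (l : R) :=
  forall eps, 0 < eps -> exists del, 0 < del /\ forall i, N del i -> Rabs (g i - l) < eps.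
Definition monoN {I : Type} (N : R -> I -> Prop) :=
  forall d1 d2 i, d1 <= d2 -> N d1 i -> N d2 i.

Section LG.
Context {I : Type} (N : R -> I -> Prop) (HN : monoN N).

Lemma LimG_ext g k l : (forall d i, N d i -> g i = k i) -> LimG N g l -> LimG N k l.
Proof.
  intros E H eps He. destruct (H eps He) as [d [Hd H1]]. exists d; split; auto.
  intros i Hi. rewrite <- (E d i Hi). auto.
Qed.

Lemma LimG_val g l l' : l = l' -> LimG N g l -> LimG N g l'.
Proof. intros ->; auto. Qed.

Lemma LimG_const c : LimG N (fun _ => c) c.
Proof. intros eps He; exists 1; split; [lra|]. intros; rewrite Rminus_diag, Rabs_R0; auto. Qed.

Lemma LimG_min g k l m eps :
  LimG N g l -> LimG N k m -> 0 < eps ->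
  exists d, 0 < d /\ forall i, N d i -> Rabs (g i - l) < eps /\ Rabs (k i - m) < eps.
Proof.
  intros H1 H2 He. destruct (H1 eps He) as [d1 [Hd1 A]]. destruct (H2 eps He) as [d2 [Hd2 B]].
  exists (Rmin d1 d2); split. apply Rmin_glb_lt; auto.
  intros i Hi; split; [apply A | apply B]; eapply HN; eauto; [apply Rmin_l | apply Rmin_r].
Qed.

Lemma LimG_plus g k l m : LimG N g l -> LimG N k m -> LimG N (fun i => g i + k i) (l + m).
Proof.
  intros H1 H2 eps He. destruct (LimG_min g k l m (eps/2) H1 H2) as [d [Hd A]]; [lra|].
  exists d; split; auto. intros i Hi. destruct (A i Hi).
  replace (g i + k i - (l + m)) with ((g i - l) + (k i - m)) by ring.
  eapply Rle_lt_trans; [apply Rabs_triang|]. lra.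
Qed.

Lemma LimG_opp g l : LimG N g l -> LimG N (fun i => - g i) (- l).
Proof.
  intros H eps He. destruct (H eps He) as [d [Hd A]]. exists d; split; auto.
  intros i Hi. replace (- g i - - l) with (- (g i - l)) by ring. rewrite Rabs_Ropp; auto.
Qed.

Lemma LimG_mult g k l m : LimG N g l -> LimG N k m -> LimG N (fun i => g i * k i) (l * m).
Proof.
  intros H1 H2 eps He.
  set (e := Rmin 1 (eps / (1 + Rabs l + Rabs m))).
  assert (Hp : 0 < 1 + Rabs l + Rabs m) by (pose proof (Rabs_pos l); pose proof (Rabs_pos m); lra).
  assert (He0 : 0 < e). { apply Rmin_glb_lt; [lra|]. apply Rdiv_lt_0_compat; auto. }
  assert (He1 : e <= 1) by apply Rmin_l.
  assert (He2 : e * (1 + Rabs l + Rabs m) <= eps).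
  { assert (e <= eps / (1 + Rabs l + Rabs m)) by apply Rmin_r.
    apply Rmult_le_compat_r with (r := 1 + Rabs l + Rabs m) in H; [|lra].
    unfold Rdiv in H. rewrite Rmult_assoc, Rinv_l in H; lra. }
  destruct (LimG_min g k l m e H1 H2 He0) as [d [Hd A]].
  exists d; split; auto. intros i Hi. destruct (A i Hi) as [A1 A2].
  replace (g i * k i - l * m) with ((g i - l) * (k i - m) + l * (k i - m) + m * (g i - l)) by ring.
  eapply Rle_lt_trans; [apply Rabs_triang|].
  eapply Rle_lt_trans; [apply Rplus_le_compat_r; apply Rabs_triang|].
  rewrite !Rabs_mult.
  pose proof (Rabs_pos l); pose proof (Rabs_pos m); pose proof (Rabs_pos (g i - l)); pose proof (Rabs_pos (k i - m)).
  assert (Rabs (g i - l) * Rabs (k i - m) <= e * e) by (apply Rmult_le_compat; lra).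
  assert (Rabs l * Rabs (k i - m) <= Rabs l * e) by (apply Rmult_le_compat_l; lra).
  assert (Rabs m * Rabs (g i - l) < Rabs m * e + e * e) by nra.
  nra.
Qed.

Lemma LimG_inv g l : l <> 0 -> LimG N g l -> LimG N (fun i => / g i) (/ l).
Proof.
  intros Hl H eps He.
  assert (Hal : 0 < Rabs l) by (apply Rabs_pos_lt; auto).
  set (e := Rmin (Rabs l / 2) (eps * Rabs l * Rabs l / 2)).
  assert (He0 : 0 < e). { apply Rmin_glb_lt; [lra|]. assert (0 < eps * Rabs l * Rabs l) by (repeat apply Rmult_lt_0_compat; auto). lra. }
  destruct (H e He0) as [d [Hd A]]. exists d; split; auto. intros i Hi.
  specialize (A i Hi).
  assert (E1 : e <= Rabs l / 2) by apply Rmin_l.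
  assert (E2 : e <= eps * Rabs l * Rabs l / 2) by apply Rmin_r.
  assert (Hg : Rabs l / 2 <= Rabs (g i)).
  { pose proof (Rabs_triang_inv l (l - g i)). replace (l - (l - g i)) with (g i) in H0 by ring.
    rewrite <- Rabs_Ropp in A. replace (- (g i - l)) with (l - g i) in A by ring. lra. }
  assert (Hg0 : g i <> 0). { intro Z. rewrite Z, Rabs_R0 in Hg. lra. }
  replace (/ g i - / l) with ((l - g i) * / (g i * l)) by (field; auto).
  rewrite Rabs_mult, Rabs_inv, Rabs_mult.
  rewrite <- Rabs_Ropp in A. replace (- (g i - l)) with (l - g i) in A by ring.
  assert (0 < Rabs (g i) * Rabs l) by (apply Rmult_lt_0_compat; lra).
  apply Rmult_lt_reg_r with (Rabs (g i) * Rabs l); auto.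
  rewrite Rmult_assoc, Rinv_l by lra. rewrite Rmult_1_r.
  assert (Rabs l / 2 * Rabs l <= Rabs (g i) * Rabs l) by (apply Rmult_le_compat_r; lra).
  nra.
Qed.

Lemma LimG_squeeze g k l m : (forall d i, N d i -> Rabs (g i - l) <= Rabs (k i - m)) ->
  LimG N k m -> LimG N g l.
Proof.
  intros S H eps He. destruct (H eps He) as [d [Hd A]]. exists d; split; auto.
  intros i Hi. eapply Rle_lt_trans; eauto.
Qed.

Lemma LimG_comp f p q x0 y0 : cont_strip f -> LimG N p x0 -> LimG N q y0 -> in01 y0 ->
  (forall d i, N d i -> in01 (q i)) -> LimG N (fun i => f (p i) (q i)) (f x0 y0).
Proof.
  intros Hf H1 H2 Hy Hq eps He. destruct (Hf x0 y0 Hy eps He) as [d0 [Hd0 A]].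
  destruct (LimG_min p q x0 y0 d0 H1 H2 Hd0) as [d [Hd B]]. exists d; split; auto.
  intros i Hi. destruct (B i Hi). apply A; eauto.
Qed.

End LG.

Definition NP (P : R -> Prop) : R -> R -> Prop := fun del h => P h /\ h <> 0 /\ Rabs h < del.
Lemma monoNP P : monoN (NP P).
Proof. intros d1 d2 h Hd [A [B C]]; split; [exact A|split; [exact B|lra]]. Qed.
Definition Lim P g l := LimG (NP P) g l.
Definition HD P (phi : R -> R) phi0 l := Lim P (fun h => (phi h - phi0) / h) l.

Lemma Lim_id P : Lim P (fun h => h) 0.
Proof. intros eps He; exists eps; split; auto. intros h [_ [_ C]]. rewrite Rminus_0_r; auto. Qed.

Lemma HD_cont P phi phi0 l : HD P phi phi0 l -> Lim P phi phi0.
Proof.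
  intros H. assert (A := LimG_mult _ (monoNP P) _ _ _ _ (Lim_id P) H).
  assert (B := LimG_plus _ (monoNP P) _ _ _ _ (LimG_const (NP P) phi0) A).
  eapply LimG_val. 2: eapply LimG_ext. 3: exact B. ring.
  intros d h [_ [Hh _]]. field; auto.
Qed.
Lemma HD_ext P phi psi phi0 l : (forall h, P h -> h <> 0 -> phi h = psi h) -> HD P phi phi0 l -> HD P psi phi0 l.
Proof. intros E. apply LimG_ext. intros d h [A [B _]]. rewrite E; auto. Qed.

Lemma HD_plus P phi psi a b l m : HD P phi a l -> HD P psi b m ->
  HD P (fun h => phi h + psi h) (a + b) (l + m).
Proof.
  intros H1 H2. eapply LimG_ext. 2: apply (LimG_plus _ (monoNP P) _ _ _ _ H1 H2).
  intros d h [_ [Hh _]]. simpl. field; auto.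
Qed.

Lemma HD_opp P phi a l : HD P phi a l -> HD P (fun h => - phi h) (- a) (- l).
Proof.
  intros H1. eapply LimG_ext. 2: apply (LimG_opp _ _ _ H1).
  intros d h [_ [Hh _]]. simpl. field; auto.
Qed.

Lemma HD_const P c : HD P (fun _ => c) c 0.
Proof.
  eapply LimG_ext. 2: apply (LimG_const _ 0). intros d h [_ [Hh _]]. field; auto.
Qed.

Lemma HD_mult P phi psi a b l m : HD P phi a l -> HD P psi b m ->
  HD P (fun h => phi h * psi h) (a * b) (l * b + a * m).
Proof.
  intros H1 H2. pose proof (HD_cont _ _ _ _ H2) as C2.
  assert (A := LimG_mult _ (monoNP P) _ _ _ _ H1 C2).
  assert (B := LimG_mult _ (monoNP P) _ _ _ _ (LimG_const (NP P) a) H2).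
  eapply LimG_ext. 2: apply (LimG_plus _ (monoNP P) _ _ _ _ A B).
  intros d h [_ [Hh _]]. simpl. field; auto.
Qed.

Lemma HD_inv P phi a l : a <> 0 -> (forall h, P h -> h <> 0 -> phi h <> 0) -> HD P phi a l ->
  HD P (fun h => / phi h) (/ a) (- (l * / a * / a)).
Proof.
  intros Ha Hn H1. pose proof (HD_cont _ _ _ _ H1) as C1.
  assert (A := LimG_inv _ _ _ Ha C1).
  assert (B := LimG_mult _ (monoNP P) _ _ _ _ H1 A).
  assert (B' := LimG_mult _ (monoNP P) _ _ _ _ B (LimG_const (NP P) (/a))).
  eapply LimG_ext. 2: apply (LimG_opp _ _ _ B').
  intros d h [Hp [Hh _]]. simpl. specialize (Hn h Hp Hh). field; auto.
Qed.

Lemma pdx_HD f x y d : pdx f x y d <-> HD (fun _ => True) (fun h => f (x + h) y) (f x y) d.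
Proof.
  split.
  - intros H eps He. destruct (H eps He) as [del [Hd A]]. exists del; split; auto.
    intros h [_ [B C]]. auto.
  - intros H eps He. destruct (H eps He) as [del [Hd A]]. exists del; split; auto.
    intros h B C. apply (A h); repeat split; auto.
Qed.

Lemma pdy_HD f x y d : pdy f x y d <-> HD (fun h => in01 (y + h)) (fun h => f x (y + h)) (f x y) d.
Proof.
  split.
  - intros H eps He. destruct (H eps He) as [del [Hd A]]. exists del; split; auto.
    intros h [D [B C]]. auto.
  - intros H eps He. destruct (H eps He) as [del [Hd A]]. exists del; split; auto.
    intros h B C D. apply (A h). split; [exact D|split; assumption].
Qed.

Definition Nstrip (x y : R) : R -> R * R -> Prop :=
  fun del p => in01 (snd p) /\ Rabs (fst p - x) < del /\ Rabs (snd p - y) < del.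
Lemma monoNstrip x y : monoN (Nstrip x y).
Proof. intros d1 d2 p Hd [A [B C]]; split; [exact A|split; lra]. Qed.

Lemma cont_LimG f : cont_strip f <-> forall x y, in01 y ->
  LimG (Nstrip x y) (fun p => f (fst p) (snd p)) (f x y).
Proof.
  split.
  - intros H x y Hy eps He. destruct (H x y Hy eps He) as [del [Hd A]]. exists del; split; auto.
    intros [x' y'] [B [C D]]. simpl in *. auto.
  - intros H x y Hy eps He. destruct (H x y Hy eps He) as [del [Hd A]]. exists del; split; auto.
    intros x' y' B C D. apply (A (x', y')). split; [exact B|split; assumption].
Qed.

Lemma cont_const c : cont_strip (fun _ _ => c).
Proof. apply cont_LimG. intros. apply (LimG_const _ c). Qed.
Lemma cont_fx : cont_strip (fun x _ => x).
Proof. apply cont_LimG. intros x y _ eps He. exists eps; split; auto. intros p [_ [A _]]; simpl; auto. Qed.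
Lemma cont_fy : cont_strip (fun _ y => y).
Proof. apply cont_LimG. intros x y _ eps He. exists eps; split; auto. intros p [_ [_ A]]; simpl; auto. Qed.
Lemma cont_plus f g : cont_strip f -> cont_strip g -> cont_strip (fun x y => f x y + g x y).
Proof.
  rewrite !cont_LimG. intros A B x y Hy. apply (LimG_plus _ (monoNstrip x y)); auto.
Qed.
Lemma cont_opp f : cont_strip f -> cont_strip (fun x y => - f x y).
Proof. rewrite !cont_LimG. intros A x y Hy. apply LimG_opp; auto. Qed.
Lemma cont_mult f g : cont_strip f -> cont_strip g -> cont_strip (fun x y => f x y * g x y).
Proof.
  rewrite !cont_LimG. intros A B x y Hy. apply (LimG_mult _ (monoNstrip x y)); auto.
Qed.
Lemma cont_inv f c : 0 < c -> (forall x y, in01 y -> c <= f x y) -> cont_strip f -> cont_strip (fun x y => / f x y).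
Proof.
  intros Hc Hb. rewrite !cont_LimG. intros A x y Hy. apply LimG_inv; auto.
  specialize (Hb x y Hy). lra.
Qed.
Lemma cont_comp f X T : cont_strip f -> cont_strip X -> cont_strip T ->
  (forall x y, in01 y -> in01 (T x y)) -> cont_strip (fun x y => f (X x y) (T x y)).
Proof.
  intros Hf HX HT HI. assert (HX' := HX); assert (HT' := HT).
  rewrite cont_LimG in HX', HT' |- *. intros x y Hy.
  apply (LimG_comp _ (monoNstrip x y) f (fun p => X (fst p) (snd p)) (fun p => T (fst p) (snd p))); auto.
  intros d p [A _]; auto.
Qed.

Lemma cont_ext f g : (forall x y, in01 y -> f x y = g x y) -> cont_strip f -> cont_strip g.
Proof.
  intros E H x y Hy eps He. destruct (H x y Hy eps He) as [d [Hd A]]. exists d; split; auto.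
  intros. rewrite <- !E; auto.
Qed.
Lemma pdx_ext f g x y d : (forall x y, in01 y -> f x y = g x y) -> in01 y -> pdx f x y d -> pdx g x y d.
Proof.
  intros E Hy H eps He. destruct (H eps He) as [del [Hd A]]. exists del; split; auto.
  intros. rewrite <- !E; auto.
Qed.
Lemma pdy_ext f g x y d : (forall x y, in01 y -> f x y = g x y) -> in01 y -> pdy f x y d -> pdy g x y d.
Proof.
  intros E Hy H eps He. destruct (H eps He) as [del [Hd A]]. exists del; split; auto.
  intros. rewrite <- !E; auto.
Qed.
Lemma pdx_val f x y d d' : d = d' -> pdx f x y d -> pdx f x y d'.
Proof. intros ->; auto. Qed.
Lemma pdy_val f x y d d' : d = d' -> pdy f x y d -> pdy f x y d'.
Proof. intros ->; auto. Qed.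
Lemma cpt_intro (g : R -> R) x : (forall eps, 0 < eps -> exists del, 0 < del /\
   forall z, Rabs (z - x) < del -> Rabs (g z - g x) < eps) -> continuity_pt g x.
Proof.
  intros H eps He. destruct (H eps He) as [d [Hd A]]. exists d; split; auto.
  intros z [_ B]. apply A. exact B.
Qed.

Lemma pdx_dpl f x y d : pdx f x y d -> derivable_pt_lim (fun s => f s y) x d.
Proof.
  intros H eps He. destruct (H eps He) as [del [Hd A]].
  exists (mkposreal del Hd). intros h Hh Hl. apply A; auto.
Qed.

Lemma mvt1 (g g' : R -> R) : (forall s, derivable_pt_lim g s (g' s)) ->
  forall a b, exists c, Rmin a b <= c <= Rmax a b /\ g b - g a = g' c * (b - a).
Proof.
  intros H a b. apply Coquelicot.Derive.MVT_gen.
  - intros x _. apply Coquelicot.Derive.is_derive_Reals. auto.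
  - intros x _. apply derivable_continuous_pt. exists (g' x). apply H.
Qed.

Definition clamp t := Rmax 0 (Rmin 1 t).
Lemma clamp_id t : in01 t -> clamp t = t.
Proof. unfold clamp, in01, Rmax, Rmin; intros; repeat destruct Rle_dec; lra. Qed.
Lemma clamp_in t : in01 (clamp t).
Proof. unfold clamp, in01, Rmax, Rmin; intros; repeat destruct Rle_dec; lra. Qed.
Lemma clamp_lip u v : Rabs (clamp u - clamp v) <= Rabs (u - v).
Proof.
  unfold clamp, Rmax, Rmin; repeat destruct Rle_dec; unfold Rabs; repeat destruct Rcase_abs; lra.
Qed.

Lemma minmax01 a b c : in01 a -> in01 b -> Rmin a b <= c <= Rmax a b -> in01 c.
Proof. unfold in01, Rmin, Rmax; destruct Rle_dec; lra. Qed.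

Lemma mvt01 (g g' : R -> R) :
  (forall t, in01 t -> forall eps, 0 < eps -> exists del, 0 < del /\
     forall t', in01 t' -> Rabs (t' - t) < del -> Rabs (g t' - g t) < eps) ->
  (forall t, 0 < t < 1 -> pdy (fun _ y => g y) 0 t (g' t)) ->
  forall a b, in01 a -> in01 b ->
  exists c, Rmin a b <= c <= Rmax a b /\ g b - g a = g' c * (b - a).
Proof.
  intros Hc Hd a b Ha Hb.
  destruct (Coquelicot.Derive.MVT_gen (fun t => g (clamp t)) a b g') as [c [Hc1 Hc2]].
  - intros x Hx. apply Coquelicot.Derive.is_derive_Reals.
    assert (Hx1 : 0 < x < 1) by (unfold in01, Rmin, Rmax in *; destruct Rle_dec; lra).
    intros eps He. destruct (Hd x Hx1 eps He) as [del [Hdel A]].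
    assert (Hp : 0 < Rmin del (Rmin x (1 - x))) by (repeat apply Rmin_glb_lt; lra).
    exists (mkposreal _ Hp). simpl. intros h Hh Hl.
    pose proof (Rmin_l del (Rmin x (1-x))). pose proof (Rmin_r del (Rmin x (1-x))).
    pose proof (Rmin_l x (1-x)). pose proof (Rmin_r x (1-x)).
    assert (in01 (x + h)) by (unfold in01; unfold Rabs in Hl; destruct Rcase_abs; lra).
    rewrite (clamp_id (x + h)) by auto. rewrite (clamp_id x) by (unfold in01; lra).
    apply A; auto; lra.
  - intros x Hx. assert (Hx1 : in01 x) by (eapply minmax01; [exact Ha|exact Hb|exact Hx]).
    apply cpt_intro. intros eps He. destruct (Hc x Hx1 eps He) as [d [Hd0 A]].
    exists d; split; auto. intros z Hz. rewrite (clamp_id x Hx1).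
    apply A. apply clamp_in. pose proof (clamp_lip z x). rewrite (clamp_id x Hx1) in H. lra.
  - exists c; split; auto. rewrite !clamp_id in Hc2 by auto. auto.
Qed.

Definition pd (f a b : R -> R -> R) := forall x y, in01 y -> pdx f x y (a x y) /\ pdy f x y (b x y).

Lemma decomp f a b : cont_strip f -> pd f a b -> forall u0 u1 t0 t1, in01 t0 -> in01 t1 ->
  exists xi tau, Rmin u0 u1 <= xi <= Rmax u0 u1 /\ Rmin t0 t1 <= tau <= Rmax t0 t1 /\
   f u1 t1 - f u0 t0 = a xi t1 * (u1 - u0) + b u0 tau * (t1 - t0).
Proof.
  intros Hc Hp u0 u1 t0 t1 H0 H1.
  destruct (mvt1 (fun s => f s t1) (fun s => a s t1)) with (a := u0) (b := u1) as [xi [X1 X2]].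
  { intros s. apply pdx_dpl. apply Hp; auto. }
  destruct (mvt01 (fun t => f u0 t) (fun t => b u0 t)) with (a := t0) (b := t1) as [tau [T1 T2]]; auto.
  { intros t Ht eps He. destruct (Hc u0 t Ht eps He) as [d [Hd A]]. exists d; split; auto.
    intros t' Ht' Hl. apply A; auto. rewrite Rminus_diag, Rabs_R0; auto. }
  { intros t Ht. apply (Hp u0 t). unfold in01; lra. }
  exists xi, tau. split; [lra|split;[lra|]].
  replace (f u1 t1 - f u0 t0) with ((f u1 t1 - f u0 t1) + (f u0 t1 - f u0 t0)) by ring.
  rewrite X2, T2. ring.
Qed.

Lemma between_abs a b c : Rmin a b <= c <= Rmax a b -> Rabs (c - a) <= Rabs (b - a).
Proof. unfold Rmin, Rmax; destruct Rle_dec; unfold Rabs; repeat destruct Rcase_abs; lra. Qed.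

Lemma lip_x f a b K : cont_strip f -> pd f a b -> (forall x y, in01 y -> Rabs (a x y) <= K) ->
  forall u1 u2 t, in01 t -> Rabs (f u1 t - f u2 t) <= K * Rabs (u1 - u2).
Proof.
  intros Hc Hp HK u1 u2 t Ht.
  destruct (decomp f a b Hc Hp u2 u1 t t Ht Ht) as [xi [tau [_ [_ E]]]].
  rewrite E. replace (t - t) with 0 by ring. rewrite Rmult_0_r, Rplus_0_r, Rabs_mult.
  apply Rmult_le_compat_r; [apply Rabs_pos| auto].
Qed.

Lemma lip_y f a b L : cont_strip f -> pd f a b -> (forall x y, in01 y -> Rabs (b x y) <= L) ->
  forall u t1 t2, in01 t1 -> in01 t2 -> Rabs (f u t1 - f u t2) <= L * Rabs (t1 - t2).
Proof.
  intros Hc Hp HK u t1 t2 H1 H2.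
  destruct (decomp f a b Hc Hp u u t2 t1 H2 H1) as [xi [tau [_ [T E]]]].
  rewrite E. replace (u - u) with 0 by ring. rewrite Rmult_0_r, Rplus_0_l, Rabs_mult.
  apply Rmult_le_compat_r; [apply Rabs_pos| ]. apply HK. eapply minmax01; [exact H2|exact H1|exact T].
Qed.

Lemma choice_fun (Q : R -> R * R -> Prop) : (forall h, exists p, Q h p) -> exists F, forall h, Q h (F h).
Proof.
  intros H. exists (fun h => proj1_sig (constructive_indefinite_description _ (H h))).
  intros h. exact (proj2_sig (constructive_indefinite_description _ (H h))).
Qed.

Lemma path_decomp P f a b (p q : R -> R) p0 q0 :
  cont_strip f -> pd f a b -> cont_strip a -> cont_strip b ->
  Lim P p p0 -> Lim P q q0 -> in01 q0 -> (forall h, P h -> in01 (q h)) ->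
  exists xi tau : R -> R,
    (forall h, P h -> f (p h) (q h) - f p0 q0 = a (xi h) (q h) * (p h - p0) + b p0 (tau h) * (q h - q0)) /\
    Lim P (fun h => a (xi h) (q h)) (a p0 q0) /\ Lim P (fun h => b p0 (tau h)) (b p0 q0) /\
    (forall h, P h -> in01 (tau h)).
Proof.
  intros Hc Hp Ha Hb Lp Lq Hq0 Hq.
  destruct (choice_fun (fun h r => P h -> Rmin p0 (p h) <= fst r <= Rmax p0 (p h) /\
      Rmin q0 (q h) <= snd r <= Rmax q0 (q h) /\
      f (p h) (q h) - f p0 q0 = a (fst r) (q h) * (p h - p0) + b p0 (snd r) * (q h - q0))) as [F HF].
  { intros h. destruct (classic (P h)) as [Ph|nPh].
    - destruct (decomp f a b Hc Hp p0 (p h) q0 (q h) Hq0 (Hq h Ph)) as [xi [tau [A [B C]]]].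
      exists (xi, tau). intros _. simpl. auto.
    - exists (0, 0). intros; contradiction. }
  exists (fun h => fst (F h)), (fun h => snd (F h)). split; [|split; [|split]].
  - intros h Ph. apply HF; auto.
  - apply (LimG_comp _ (monoNP P)); auto.
    + apply (LimG_squeeze _ _ p p0 p0); auto. intros d h [Ph _].
      destruct (HF h Ph) as [A _]. apply between_abs; auto.
    + intros d h [Ph _]; auto.
  - apply (LimG_comp _ (monoNP P)); auto.
    + apply LimG_const.
    + apply (LimG_squeeze _ _ q q0 q0); auto. intros d h [Ph _].
      destruct (HF h Ph) as [_ [A _]]. apply between_abs; auto.
    + intros d h [Ph _]. destruct (HF h Ph) as [_ [A _]]. exact (minmax01 _ _ _ Hq0 (Hq h Ph) A).
  - intros h Ph. destruct (HF h Ph) as [_ [A _]]. exact (minmax01 _ _ _ Hq0 (Hq h Ph) A).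
Qed.
Lemma chain P f a b p q p0 q0 l1 l2 :
  cont_strip f -> pd f a b -> cont_strip a -> cont_strip b ->
  HD P p p0 l1 -> HD P q q0 l2 -> in01 q0 -> (forall h, P h -> in01 (q h)) ->
  HD P (fun h => f (p h) (q h)) (f p0 q0) (a p0 q0 * l1 + b p0 q0 * l2).
Proof.
  intros Hc Hp Ha Hb H1 H2 Hq0 Hq.
  destruct (path_decomp P f a b p q p0 q0 Hc Hp Ha Hb (HD_cont _ _ _ _ H1) (HD_cont _ _ _ _ H2) Hq0 Hq)
    as [xi [tau [E [L1 [L2 _]]]]].
  assert (M1 := LimG_mult _ (monoNP P) _ _ _ _ L1 H1).
  assert (M2 := LimG_mult _ (monoNP P) _ _ _ _ L2 H2).
  eapply LimG_ext. 2: exact (LimG_plus _ (monoNP P) _ _ _ _ M1 M2).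
  intros d h [Ph [Hh _]]. simpl. rewrite (E h Ph). field; auto.
Qed.

Lemma imp_HD P f a b c X t c0 X0 t0 lc lX :
  cont_strip f -> pd f a b -> cont_strip a -> cont_strip b ->
  (forall x y, in01 y -> Rabs (b x y) <= 1/2) ->
  HD P c c0 lc -> HD P X X0 lX -> Lim P t t0 -> in01 t0 -> (forall h, P h -> in01 (t h)) ->
  t0 = c0 + f X0 t0 -> (forall h, P h -> t h = c h + f (X h) (t h)) ->
  HD P t t0 ((lc + a X0 t0 * lX) * / (1 - b X0 t0)).
Proof.
  intros Hc Hp Ha Hb Hb2 Hdc HdX Lt Ht0 Ht E0 E.
  destruct (path_decomp P f a b X t X0 t0 Hc Hp Ha Hb (HD_cont _ _ _ _ HdX) Lt Ht0 Ht)
    as [xi [tau [D [L1 [L2 Htau]]]]].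
  assert (Hb0 : 1 - b X0 t0 <> 0) by (specialize (Hb2 X0 t0 Ht0); unfold Rabs in Hb2; destruct Rcase_abs; lra).
  assert (M1 := LimG_mult _ (monoNP P) _ _ _ _ L1 HdX).
  assert (M2 := LimG_plus _ (monoNP P) _ _ _ _ Hdc M1).
  assert (M3 := LimG_opp _ _ _ L2).
  assert (M4 := LimG_plus _ (monoNP P) _ _ _ _ (LimG_const _ 1) M3).
  assert (M5 := LimG_inv _ _ _ Hb0 M4).
  assert (M6 := LimG_mult _ (monoNP P) _ _ _ _ M2 M5).
  eapply LimG_ext. 2: exact M6.
  intros d h [Ph [Hh _]]. simpl.
  assert (Hbt : 1 - b X0 (tau h) <> 0).
  { specialize (Hb2 X0 (tau h) (Htau h Ph)). unfold Rabs in Hb2; destruct Rcase_abs; lra. }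
  specialize (D h Ph). specialize (E h Ph).
  assert (K : (t h - t0) * (1 - b X0 (tau h)) = (c h - c0) + a (xi h) (t h) * (X h - X0)).
  { rewrite E at 1. rewrite E0 at 1. nra. }
  apply Rmult_eq_reg_r with (h * (1 - b X0 (tau h))).
  2: { apply Rmult_integral_contrapositive; auto. }
  replace ((t h - t0) / h * (h * (1 - b X0 (tau h)))) with ((t h - t0) * (1 - b X0 (tau h))) by (field; auto).
  rewrite K. field. split; auto.
Qed.
Fixpoint Ck (m : nat) (f : R -> R -> R) : Prop :=
  match m with
  | O => cont_strip f
  | S n => cont_strip f /\ exists a b, pd f a b /\ Ck n a /\ Ck n b
  end.

Lemma Ck_cont m f : Ck m f -> cont_strip f.
Proof. destruct m; simpl; tauto. Qed.

Lemma Ck_S m : forall f, Ck (S m) f -> Ck m f.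
Proof.
  induction m as [|m IH]; intros f H.
  - simpl in *; tauto.
  - destruct H as [Hc [a [b [Hp [Ha Hb]]]]]. split; auto. exists a, b; split; [auto|split; apply IH; auto].
Qed.

Lemma Ck_le k m f : (k <= m)%nat -> Ck m f -> Ck k f.
Proof. induction 1; auto. intros Hm. apply IHle. apply Ck_S; auto. Qed.

Lemma pd_ext f g a b : (forall x y, in01 y -> f x y = g x y) -> pd f a b -> pd g a b.
Proof. intros E H x y Hy. destruct (H x y Hy). split; [eapply pdx_ext|eapply pdy_ext]; eauto. Qed.

Lemma Ck_ext m f g : (forall x y, in01 y -> f x y = g x y) -> Ck m f -> Ck m g.
Proof.
  destruct m; simpl. apply cont_ext.
  intros E [Hc [a [b [Hp [Ha Hb]]]]]. split. eapply cont_ext; eauto.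
  exists a, b. split; auto. eapply pd_ext; eauto.
Qed.

Lemma HD_id P : HD P (fun h => h) 0 1.
Proof. eapply LimG_ext. 2: apply (LimG_const _ 1). intros d h [_ [Hh _]]. field; auto. Qed.

Lemma HD_shift P x : HD P (fun h => x + h) x 1.
Proof. eapply LimG_ext. 2: apply (LimG_const _ 1). intros d h [_ [Hh _]]. simpl. field; auto. Qed.

Lemma pd_const c : pd (fun _ _ => c) (fun _ _ => 0) (fun _ _ => 0).
Proof. intros x y Hy. rewrite pdx_HD, pdy_HD. split; apply HD_const. Qed.

Lemma pd_fx : pd (fun x _ => x) (fun _ _ => 1) (fun _ _ => 0).
Proof.
  intros x y Hy. rewrite pdx_HD, pdy_HD. split.
  - apply HD_shift.
  - apply HD_const.
Qed.

Lemma pd_fy : pd (fun _ y => y) (fun _ _ => 0) (fun _ _ => 1).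
Proof.
  intros x y Hy. rewrite pdx_HD, pdy_HD. split.
  - apply HD_const.
  - apply HD_shift.
Qed.

Lemma pd_plus f g a b c d : pd f a b -> pd g c d ->
  pd (fun x y => f x y + g x y) (fun x y => a x y + c x y) (fun x y => b x y + d x y).
Proof.
  intros H1 H2 x y Hy. destruct (H1 x y Hy) as [A1 B1]. destruct (H2 x y Hy) as [A2 B2].
  rewrite pdx_HD, pdy_HD in *. split; apply HD_plus; auto.
Qed.

Lemma pd_opp f a b : pd f a b -> pd (fun x y => - f x y) (fun x y => - a x y) (fun x y => - b x y).
Proof.
  intros H1 x y Hy. destruct (H1 x y Hy) as [A1 B1].
  rewrite pdx_HD, pdy_HD in *. split; apply HD_opp; auto.
Qed.

Lemma pd_mult f g a b c d : pd f a b -> pd g c d ->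
  pd (fun x y => f x y * g x y) (fun x y => a x y * g x y + f x y * c x y)
     (fun x y => b x y * g x y + f x y * d x y).
Proof.
  intros H1 H2 x y Hy. destruct (H1 x y Hy) as [A1 B1]. destruct (H2 x y Hy) as [A2 B2].
  rewrite pdx_HD, pdy_HD in *. split; apply HD_mult; auto.
Qed.

Lemma pd_inv f a b c0 : 0 < c0 -> (forall x y, in01 y -> c0 <= f x y) -> pd f a b ->
  pd (fun x y => / f x y) (fun x y => - (a x y * / f x y * / f x y))
     (fun x y => - (b x y * / f x y * / f x y)).
Proof.
  intros Hc Hb H1 x y Hy. destruct (H1 x y Hy) as [A1 B1].
  assert (Hf : f x y <> 0) by (specialize (Hb x y Hy); lra).
  rewrite pdx_HD, pdy_HD in *. split; apply HD_inv; auto.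
  - intros h _ _. specialize (Hb (x + h) y Hy). lra.
  - intros h Hh _. specialize (Hb x (y + h) Hh). lra.
Qed.

Lemma pd_comp f a b X Xa Xb T Ta Tb :
  cont_strip f -> pd f a b -> cont_strip a -> cont_strip b ->
  pd X Xa Xb -> pd T Ta Tb -> (forall x y, in01 y -> in01 (T x y)) ->
  pd (fun x y => f (X x y) (T x y))
     (fun x y => a (X x y) (T x y) * Xa x y + b (X x y) (T x y) * Ta x y)
     (fun x y => a (X x y) (T x y) * Xb x y + b (X x y) (T x y) * Tb x y).
Proof.
  intros Hc Hp Ha Hb HX HT HI x y Hy. destruct (HX x y Hy) as [A1 B1]. destruct (HT x y Hy) as [A2 B2].
  rewrite pdx_HD, pdy_HD in *. split.
  - apply (chain _ f a b (fun h => X (x + h) y) (fun h => T (x + h) y)); auto.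
  - apply (chain _ f a b (fun h => X x (y + h)) (fun h => T x (y + h))); auto.
Qed.

Lemma Ck_const m c : Ck m (fun _ _ => c).
Proof.
  revert c; induction m; intros c; simpl. apply cont_const. split. apply cont_const.
  exists (fun _ _ => 0), (fun _ _ => 0). split; [apply pd_const|split; apply IHm].
Qed.

Lemma Ck_fx m : Ck m (fun x _ => x).
Proof.
  destruct m; simpl. apply cont_fx. split. apply cont_fx.
  exists (fun _ _ => 1), (fun _ _ => 0). split; [apply pd_fx|split; apply Ck_const].
Qed.

Lemma Ck_fy m : Ck m (fun _ y => y).
Proof.
  destruct m; simpl. apply cont_fy. split. apply cont_fy.
  exists (fun _ _ => 0), (fun _ _ => 1). split; [apply pd_fy|split; apply Ck_const].
Qed.

Lemma Ck_plus m : forall f g, Ck m f -> Ck m g -> Ck m (fun x y => f x y + g x y).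
Proof.
  induction m as [|m IH]; simpl. apply cont_plus.
  intros f g [Hf [a [b [Hp [Ha Hb]]]]] [Hg [c [d [Hq [Hc Hd]]]]].
  split. apply cont_plus; auto. eexists _, _. split. apply pd_plus; eauto. split; apply IH; auto.
Qed.

Lemma Ck_opp m : forall f, Ck m f -> Ck m (fun x y => - f x y).
Proof.
  induction m as [|m IH]; simpl. apply cont_opp.
  intros f [Hf [a [b [Hp [Ha Hb]]]]].
  split. apply cont_opp; auto. eexists _, _. split. apply pd_opp; eauto. split; apply IH; auto.
Qed.

Lemma Ck_mult m : forall f g, Ck m f -> Ck m g -> Ck m (fun x y => f x y * g x y).
Proof.
  induction m as [|m IH]; simpl. apply cont_mult.
  intros f g Hf' Hg'. assert (Hf1 := Ck_S m f Hf'). assert (Hg1 := Ck_S m g Hg').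
  destruct Hf' as [Hf [a [b [Hp [Ha Hb]]]]]. destruct Hg' as [Hg [c [d [Hq [Hc Hd]]]]].
  split. apply cont_mult; auto. eexists _, _. split. apply pd_mult; eauto.
  split; apply Ck_plus; apply IH; auto.
Qed.

Lemma Ck_inv m c0 : 0 < c0 -> forall f, (forall x y, in01 y -> c0 <= f x y) -> Ck m f ->
  Ck m (fun x y => / f x y).
Proof.
  intros Hc0. induction m as [|m IH]; simpl.
  - intros f Hb Hf. apply (cont_inv f c0); auto.
  - intros f Hb Hf'. assert (Hf1 := Ck_S m f Hf').
    destruct Hf' as [Hf [a [b [Hp [Ha Hb']]]]].
    split. apply (cont_inv f c0); auto. eexists _, _. split. apply (pd_inv f a b c0); eauto.
    assert (Hi := IH f Hb Hf1).
    split; apply Ck_opp; apply Ck_mult; auto; apply Ck_mult; auto.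
Qed.

Lemma Ck_comp m : forall f X T, Ck m f -> Ck m X -> Ck m T -> (forall x y, in01 y -> in01 (T x y)) ->
  Ck m (fun x y => f (X x y) (T x y)).
Proof.
  induction m as [|m IH]; simpl.
  - intros; apply cont_comp; auto.
  - intros f X T Hf' HX' HT' HI.
    assert (HX1 := Ck_S m X HX'). assert (HT1 := Ck_S m T HT').
    destruct Hf' as [Hf [a [b [Hp [Ha Hb]]]]].
    destruct HX' as [HX [Xa [Xb [HpX [HXa HXb]]]]].
    destruct HT' as [HT [Ta [Tb [HpT [HTa HTb]]]]].
    split. apply cont_comp; auto. eexists _, _. split.
    apply pd_comp; eauto using Ck_cont.
    split; apply Ck_plus; apply Ck_mult; auto.
Qed.
Definition Nint (t : R) : R -> R -> Prop := fun del t' => in01 t' /\ Rabs (t' - t) < del.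
Lemma monoNint t : monoN (Nint t).
Proof. intros d1 d2 p Hd [A B]; split; [exact A|lra]. Qed.

Lemma cont_line f x t : cont_strip f -> in01 t -> LimG (Nint t) (fun t' => f x t') (f x t).
Proof.
  intros H Ht eps He. destruct (H x t Ht eps He) as [d [Hd A]]. exists d; split; auto.
  intros t' [B C]. apply A; auto. rewrite Rminus_diag, Rabs_R0; auto.
Qed.

Lemma mvt01' (g g' : R -> R) :
  (forall t, in01 t -> LimG (Nint t) g (g t)) ->
  (forall t, 0 < t < 1 -> HD (fun h => in01 (t + h)) (fun h => g (t + h)) (g t) (g' t)) ->
  forall a b, in01 a -> in01 b ->
  exists c, Rmin a b <= c <= Rmax a b /\ g b - g a = g' c * (b - a).
Proof.
  intros Hc Hd. apply mvt01.
  - intros t Ht eps He. destruct (Hc t Ht eps He) as [d [Hd0 A]]. exists d; split; auto.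
    intros t' B C. apply A. split; auto.
  - intros t Ht. apply pdy_HD. apply Hd; auto.
Qed.

Lemma schwarz u A B C E : cont_strip u -> cont_strip A ->
  (forall x y, in01 y -> pdx u x y (A x y) /\ pdy u x y (B x y) /\ pdy A x y (C x y) /\ pdx B x y (E x y)) ->
  cont_strip C -> cont_strip E -> forall x y, in01 y -> C x y = E x y.
Proof.
  intros Hu HA Hder HC HE x y Hy.
  assert (key : forall e, 0 < e -> Rabs (C x y - E x y) < 2 * e).
  { intros e He.
    destruct (HC x y Hy e He) as [d1 [Hd1 A1]]. destruct (HE x y Hy e He) as [d2 [Hd2 A2]].
    set (d := Rmin d1 d2).
    assert (Hd : 0 < d) by (apply Rmin_glb_lt; auto).
    assert (Hdd1 : d <= d1) by apply Rmin_l. assert (Hdd2 : d <= d2) by apply Rmin_r.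
    set (h := d / 2).
    set (k := if Rle_dec y (1/2) then Rmin (d/2) (1/2) else - Rmin (d/2) (1/2)).
    assert (Hm1 : Rmin (d/2) (1/2) <= d/2) by apply Rmin_l.
    assert (Hm2 : Rmin (d/2) (1/2) <= 1/2) by apply Rmin_r.
    assert (Hm3 : 0 < Rmin (d/2) (1/2)) by (apply Rmin_glb_lt; lra).
    assert (Hk : k <> 0 /\ Rabs k < d /\ in01 (y + k)).
    { unfold k, in01 in *; destruct Rle_dec; unfold Rabs; destruct Rcase_abs; repeat split; lra. }
    destruct Hk as [Hk0 [Hkd Hyk]].
    assert (Hh0 : h <> 0) by (unfold h; lra).
    assert (Hhd : Rabs h < d) by (unfold h; rewrite Rabs_pos_eq; lra).
    destruct (mvt1 (fun s => u s (y + k) - u s y) (fun s => A s (y + k) - A s y)) with (a := x) (b := x + h)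
      as [xi [Xi1 Xi2]].
    { intros s. apply derivable_pt_lim_minus; apply pdx_dpl; apply Hder; auto. }
    destruct (mvt01' (fun t => A xi t) (fun t => C xi t)) with (a := y) (b := y + k) as [tau [T1 T2]]; auto.
    { intros t Ht. apply cont_line; auto. }
    { intros t Ht. apply pdy_HD. apply Hder. unfold in01; lra. }
    destruct (mvt01' (fun t => u (x + h) t + - u x t) (fun t => B (x + h) t + - B x t)) with (a := y) (b := y + k)
      as [tau' [T1' T2']]; auto.
    { intros t Ht. apply (LimG_plus _ (monoNint t)). apply cont_line; auto. apply LimG_opp. apply cont_line; auto. }
    { intros t Ht. assert (Ht' : in01 t) by (unfold in01; lra).
      apply HD_plus. apply pdy_HD. apply Hder; auto. apply HD_opp. apply pdy_HD. apply Hder; auto. }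
    assert (Htau' : in01 tau') by exact (minmax01 _ _ _ Hy Hyk T1').
    assert (Htau : in01 tau) by exact (minmax01 _ _ _ Hy Hyk T1).
    destruct (mvt1 (fun s => B s tau') (fun s => E s tau')) with (a := x) (b := x + h) as [xi' [Xi1' Xi2']].
    { intros s. apply pdx_dpl. apply Hder; auto. }
    assert (Eq : C xi tau * k * h = E xi' tau' * h * k).
    { replace (x + h - x) with h in Xi2, Xi2' by ring. replace (y + k - y) with k in T2, T2' by ring.
      replace (B (x + h) tau' + - B x tau') with (B (x + h) tau' - B x tau') in T2' by ring.
      rewrite T2 in Xi2. rewrite Xi2' in T2'. lra. }
    assert (Eq2 : C xi tau = E xi' tau').
    { apply Rmult_eq_reg_r with (k * h). 2: apply Rmult_integral_contrapositive; auto.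
      rewrite <- Rmult_assoc, Eq. ring. }
    assert (B1 : Rabs (xi - x) < d) by (pose proof (between_abs _ _ _ Xi1) as H; replace (x + h - x) with h in H by ring; lra).
    assert (B2 : Rabs (xi' - x) < d) by (pose proof (between_abs _ _ _ Xi1') as H; replace (x + h - x) with h in H by ring; lra).
    assert (B3 : Rabs (tau - y) < d) by (pose proof (between_abs _ _ _ T1) as H; replace (y + k - y) with k in H by ring; lra).
    assert (B4 : Rabs (tau' - y) < d) by (pose proof (between_abs _ _ _ T1') as H; replace (y + k - y) with k in H by ring; lra).
    specialize (A1 xi tau Htau ltac:(lra) ltac:(lra)).
    specialize (A2 xi' tau' Htau' ltac:(lra) ltac:(lra)).
    rewrite Eq2 in A1.
    replace (C x y - E x y) with ((E xi' tau' - E x y) - (E xi' tau' - C x y)) by ring.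
    eapply Rle_lt_trans; [apply Rabs_triang|]. rewrite Rabs_Ropp. lra. }
  destruct (Req_dec (C x y) (E x y)) as [Q|Q]; auto.
  assert (P0 : 0 < Rabs (C x y - E x y)) by (apply Rabs_pos_lt; lra).
  specialize (key (Rabs (C x y - E x y) / 2) ltac:(lra)). lra.
Qed.
Lemma jet_Ck s f D : Cs_jet s f D -> forall m i j, (i + j + m <= s)%nat -> Ck m (D i j).
Proof.
  intros [J1 [J2 J3]] m. induction m as [|m IH]; intros i j Hij; simpl.
  - apply J2. lia.
  - split. apply J2; lia. exists (D (S i) j), (D i (S j)). split.
    + intros x y Hy. apply J3; auto. lia.
    + split; apply IH; lia.
Qed.

Lemma Ck_jet m : forall f, Ck m f -> exists Dj, Cs_jet m f Dj.
Proof.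
  induction m as [|n IH]; intros f Hf.
  - exists (fun _ _ => f). split; [|split].
    + intros; auto.
    + intros; simpl; auto.
    + intros; lia.
  - destruct Hf as [Hf [a [b [Hp [Ha Hb]]]]].
    destruct (IH a Ha) as [Da [A1 [A2 A3]]]. destruct (IH b Hb) as [Db [B1 [B2 B3]]].
    set (Dj := fun i j => match i, j with O, O => f | S i', _ => Da i' j | O, S j' => Db O j' end).
    assert (Cont : forall i j, (i + j <= S n)%nat -> cont_strip (Dj i j)).
    { intros [|i] [|j] Hij; simpl; auto; [apply B2|apply A2|apply A2]; lia. }
    assert (Py : forall j, (j < S n)%nat -> forall x y, in01 y -> pdy (Dj O j) x y (Dj O (S j) x y)).
    { intros [|j] Hj x y Hy; simpl.
      - eapply pdy_val; [symmetry; apply B1; auto|]. apply Hp; auto.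
      - apply B3; auto. lia. }
    assert (Cl : forall j, (j <= n)%nat -> forall x y, in01 y -> pdx (Dj O j) x y (Da O j x y)).
    { induction j as [|j IHj]; intros Hj x y Hy.
      - simpl. eapply pdx_val; [symmetry; apply A1; auto|]. apply Hp; auto.
      - assert (Sw : Da O (S j) x y = Db 1%nat j x y).
        { apply (schwarz (Dj O j) (Da O j) (Dj O (S j)) (Da O (S j)) (Db 1%nat j)).
          - apply Cont; lia.
          - apply A2; lia.
          - intros x' y' Hy'. split; [apply IHj; auto; lia|]. split; [apply Py; auto; lia|].
            split; [apply A3; auto; lia|]. simpl. apply B3; auto; lia.
          - apply A2; lia.
          - apply B2; lia.
          - auto. }
        rewrite Sw. simpl. apply B3; auto; lia. }
    exists Dj. split; [|split].
    + intros; reflexivity.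
    + exact Cont.
    + intros [|i] j Hij x y Hy.
      * split; [apply Cl; auto; lia| apply Py; auto].
      * simpl. apply A3; auto. lia.
Qed.

Lemma Ck_Cs m f : Ck m f -> Cs m f.
Proof. intros H. destruct (Ck_jet m f H) as [D HD']. exists D; auto. Qed.
Lemma cont_path_x t x y : cont_strip t -> in01 y -> Lim (fun _ => True) (fun h => t (x + h) y) (t x y).
Proof.
  intros H Hy eps He. destruct (H x y Hy eps He) as [d [Hd A]]. exists d; split; auto.
  intros h [_ [_ B]]. apply A; auto. replace (x + h - x) with h by ring; auto.
  rewrite Rminus_diag, Rabs_R0; auto.
Qed.

Lemma cont_path_y t x y : cont_strip t -> in01 y -> Lim (fun h => in01 (y + h)) (fun h => t x (y + h)) (t x y).
Proof.
  intros H Hy eps He. destruct (H x y Hy eps He) as [d [Hd A]]. exists d; split; auto.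
  intros h [Hh [_ B]]. apply A; auto. rewrite Rminus_diag, Rabs_R0; auto.
  replace (y + h - y) with h by ring; auto.
Qed.

Lemma implicit_cont c X f a b t K :
  cont_strip c -> cont_strip X -> cont_strip f -> pd f a b ->
  (forall x y, in01 y -> Rabs (a x y) <= K) -> (forall x y, in01 y -> Rabs (b x y) <= 1/2) ->
  (forall x y, in01 y -> in01 (t x y)) -> (forall x y, in01 y -> t x y = c x y + f (X x y) (t x y)) ->
  cont_strip t.
Proof.
  intros Hc HX Hf Hp HK Hb Ht E x y Hy eps He.
  assert (K0 : 0 <= K) by (specialize (HK 0 0 ltac:(unfold in01; lra)); pose proof (Rabs_pos (a 0 0)); lra).
  destruct (Hc x y Hy (eps / 4) ltac:(lra)) as [d1 [Hd1 A1]].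
  assert (Hq : 0 < eps / (4 * (K + 1))) by (apply Rdiv_lt_0_compat; lra).
  destruct (HX x y Hy _ Hq) as [d2 [Hd2 A2]].
  exists (Rmin d1 d2); split. apply Rmin_glb_lt; auto.
  intros x' y' Hy' B1 B2.
  pose proof (Rmin_l d1 d2). pose proof (Rmin_r d1 d2).
  specialize (A1 x' y' Hy' ltac:(lra) ltac:(lra)). specialize (A2 x' y' Hy' ltac:(lra) ltac:(lra)).
  pose proof (lip_x f a b K Hf Hp HK (X x' y') (X x y) (t x' y') (Ht x' y' Hy')) as L1.
  pose proof (lip_y f a b (1/2) Hf Hp Hb (X x y) (t x' y') (t x y) (Ht x' y' Hy') (Ht x y Hy)) as L2.
  assert (Main : Rabs (t x' y' - t x y) <= Rabs (c x' y' - c x y) + K * Rabs (X x' y' - X x y) + 1/2 * Rabs (t x' y' - t x y)).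
  { rewrite (E x' y' Hy') at 1. rewrite (E x y Hy) at 1.
    replace (c x' y' + f (X x' y') (t x' y') - (c x y + f (X x y) (t x y))) with
      ((c x' y' - c x y) + ((f (X x' y') (t x' y') - f (X x y) (t x' y')) + (f (X x y) (t x' y') - f (X x y) (t x y)))) by ring.
    eapply Rle_trans; [apply Rabs_triang|]. rewrite Rplus_assoc. apply Rplus_le_compat_l.
    eapply Rle_trans; [apply Rabs_triang|]. lra. }
  assert (K * Rabs (X x' y' - X x y) <= K * (eps / (4 * (K + 1)))) by (apply Rmult_le_compat_l; lra).
  assert (K * (eps / (4 * (K + 1))) <= eps / 4).
  { unfold Rdiv. rewrite Rinv_mult. 
    assert (0 < / (K+1)) by (apply Rinv_0_lt_compat; lra).
    assert (K * / (K + 1) <= 1).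
    { apply Rmult_le_reg_r with (K + 1); [lra|]. rewrite Rmult_assoc, Rinv_l by lra. lra. }
    assert (0 < eps * / 4) by lra. nra. }
  lra.
Qed.

Lemma implicit_Ck n c X f a b t K :
  Ck (S n) c -> Ck (S n) X -> cont_strip f -> pd f a b -> Ck n a -> Ck n b ->
  (forall x y, in01 y -> Rabs (a x y) <= K) -> (forall x y, in01 y -> Rabs (b x y) <= 1/2) ->
  (forall x y, in01 y -> in01 (t x y)) -> (forall x y, in01 y -> t x y = c x y + f (X x y) (t x y)) ->
  Ck (S n) t.
Proof.
  intros Hc' HX' Hf Hp Ha Hb HK Hb2 Ht E.
  assert (Hct := Hc'). destruct Hct as [Hc [ca [cb [Hpc [Hca Hcb]]]]].
  assert (HXt := HX'). destruct HXt as [HX [Xa [Xb [HpX [HXa HXb]]]]].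
  assert (Hac := Ck_cont _ _ Ha). assert (Hbc := Ck_cont _ _ Hb).
  assert (Tc : cont_strip t) by exact (implicit_cont c X f a b t K Hc HX Hf Hp HK Hb2 Ht E).
  assert (Den : forall x y, in01 y -> 1/2 <= 1 + - b (X x y) (t x y)).
  { intros x y Hy. specialize (Hb2 (X x y) (t x y) (Ht x y Hy)). unfold Rabs in Hb2; destruct Rcase_abs; lra. }
  enough (G : forall k, (k <= S n)%nat -> Ck k t) by (apply G; lia).
  induction k as [|k IHk]; intros Hk.
  - exact Tc.
  - assert (Tk := IHk ltac:(lia)). split; auto.
    assert (Ha' : Ck k a) by (apply (Ck_le _ n); auto; lia).
    assert (Hb' : Ck k b) by (apply (Ck_le _ n); auto; lia).
    assert (HX'' : Ck k X) by (apply (Ck_le _ (S n)); auto; lia).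
    eexists (fun x y => (ca x y + a (X x y) (t x y) * Xa x y) * / (1 + - b (X x y) (t x y))),
            (fun x y => (cb x y + a (X x y) (t x y) * Xb x y) * / (1 + - b (X x y) (t x y))).
    split; [|split].
    + intros x y Hy. destruct (Hpc x y Hy) as [C1 C2]. destruct (HpX x y Hy) as [X1 X2].
      rewrite pdx_HD, pdy_HD in *. split.
      * apply (imp_HD _ f a b (fun h => c (x + h) y) (fun h => X (x + h) y) (fun h => t (x + h) y) (c x y) (X x y) (t x y)); auto.
        apply cont_path_x; auto.
      * apply (imp_HD _ f a b (fun h => c x (y + h)) (fun h => X x (y + h)) (fun h => t x (y + h)) (c x y) (X x y) (t x y)); auto.
        apply cont_path_y; auto.
    + apply Ck_mult.
      * apply Ck_plus. apply (Ck_le _ n); auto; lia. apply Ck_mult. apply Ck_comp; auto.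
        apply (Ck_le _ n); auto; lia.
      * apply (Ck_inv _ (1/2)); [lra|exact Den|]. apply Ck_plus. apply Ck_const. apply Ck_opp. apply Ck_comp; auto.
    + apply Ck_mult.
      * apply Ck_plus. apply (Ck_le _ n); auto; lia. apply Ck_mult. apply Ck_comp; auto.
        apply (Ck_le _ n); auto; lia.
      * apply (Ck_inv _ (1/2)); [lra|exact Den|]. apply Ck_plus. apply Ck_const. apply Ck_opp. apply Ck_comp; auto.
Qed.
Lemma fix_unique (g : R -> R) c t1 t2 :
  (forall a b, in01 a -> in01 b -> Rabs (g a - g b) <= 1/4 * Rabs (a - b)) ->
  in01 t1 -> in01 t2 -> t1 = c + g t1 -> t2 = c + g t2 -> t1 = t2.
Proof.
  intros L H1 H2 E1 E2. specialize (L t1 t2 H1 H2).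
  assert (Q : t1 - t2 = g t1 - g t2) by lra. rewrite <- Q in L.
  pose proof (Rabs_pos (t1 - t2)).
  assert (Z : Rabs (t1 - t2) = 0) by lra.
  destruct (Req_dec (t1 - t2) 0) as [Z'|Z']; [lra|]. exfalso. apply (Rabs_no_R0 _ Z' Z).
Qed.

Lemma fix_exists (g : R -> R) c :
  (forall a b, in01 a -> in01 b -> Rabs (g a - g b) <= 1/4 * Rabs (a - b)) ->
  g 0 = 0 -> g 1 = 0 -> in01 c -> exists t, in01 t /\ t = c + g t.
Proof.
  intros L G0 G1 Hc.
  assert (I0 : in01 0) by (unfold in01; lra). assert (I1 : in01 1) by (unfold in01; lra).
  destruct (Req_dec c 0) as [->|C0]. { exists 0. split; auto. rewrite G0; ring. }
  destruct (Req_dec c 1) as [->|C1]. { exists 1. split; auto. rewrite G1; ring. }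
  set (psi := fun z => z - c - g (clamp z)).
  assert (Cp : continuity psi).
  { intros z. apply cpt_intro. intros eps He. exists (eps / 2); split; [lra|].
    intros w Hw. unfold psi.
    pose proof (L (clamp w) (clamp z) (clamp_in w) (clamp_in z)).
    pose proof (clamp_lip w z).
    replace (w - c - g (clamp w) - (z - c - g (clamp z))) with ((w - z) + - (g (clamp w) - g (clamp z))) by ring.
    eapply Rle_lt_trans; [apply Rabs_triang|]. rewrite Rabs_Ropp.
    pose proof (Rabs_pos (w - z)). lra. }
  destruct (IVT psi 0 1 Cp) as [z [Hz Ez]].
  - lra.
  - unfold psi. rewrite clamp_id by auto. rewrite G0. unfold in01 in Hc. lra.
  - unfold psi. rewrite clamp_id by auto. rewrite G1. unfold in01 in Hc. lra.
  - exists z. assert (Iz : in01 z) by (unfold in01; lra). split; auto.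
    unfold psi in Ez. rewrite clamp_id in Ez by auto. lra.
Qed.

Lemma choice2 (Q : R -> R -> R -> Prop) : (forall x y, exists t, Q x y t) -> exists T, forall x y, Q x y (T x y).
Proof.
  intros H. exists (fun x y => proj1_sig (constructive_indefinite_description _ (H x y))).
  intros x y. exact (proj2_sig (constructive_indefinite_description _ (H x y))).
Qed.

Lemma per_nat (rho : R -> R -> R) : periodic1 rho -> forall n x y, in01 y -> rho (x + INR n) y = rho x y.
Proof.
  intros Hp n. induction n as [|n IH]; intros x y Hy.
  - simpl. rewrite Rplus_0_r; auto.
  - rewrite S_INR. replace (x + (INR n + 1)) with ((x + INR n) + 1) by ring. rewrite Hp; auto.
Qed.

Lemma per_Z (rho : R -> R -> R) : periodic1 rho -> forall k x y, in01 y -> rho (x + IZR k) y = rho x y.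
Proof.
  intros Hp k x y Hy. destruct (Z_le_gt_dec 0 k) as [Hk|Hk].
  - rewrite <- (Z2Nat.id k Hk). rewrite <- INR_IZR_INZ. apply per_nat; auto.
  - assert (Hk' : (0 <= - k)%Z) by lia. rewrite <- (Z2Nat.id (- k) Hk') in Hk'.
    replace (IZR k) with (- IZR (- k)) by (rewrite opp_IZR; ring).
    rewrite <- (Z2Nat.id (- k)) by lia. rewrite <- INR_IZR_INZ.
    rewrite <- (per_nat rho Hp (Z.to_nat (- k)) (x + - INR (Z.to_nat (- k))) y Hy). f_equal. ring.
Qed.
Theorem lemmaA1 :
  forall s : nat, (2 <= s)%nat ->
  exists eps : R, 0 < eps /\
  forall (rho : R -> R -> R) (D : nat -> nat -> R -> R -> R),
    periodic1 rho ->
    Cs_jet s rho D ->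
    (forall x, rho x 0 = 0 /\ rho x 1 = 0) ->
    (forall i j x y, (i + j <= s)%nat -> in01 y -> Rabs (D i j x y) <= eps) ->
    exists F : R -> R -> R * R,
      is_F s rho F /\
      (forall G, is_F s rho G -> Amap_eq F G) /\
      (forall x, Apt_eq (F x 1) (x, 1)) /\
      exists Finv : R -> R -> R * R,
        Amap Finv /\
        (forall x y, in01 y ->
           Apt_eq (F (fst (Finv x y)) (snd (Finv x y))) (x, y) /\
           Apt_eq (Finv (fst (F x y)) (snd (F x y))) (x, y)) /\
        (forall x y, in01 y ->
           eqmod1 (fst (Finv x y)) (x - y + rho x y) /\
           snd (Finv x y) = y - rho x y - rho (fst (Finv x y)) (snd (Finv x y))).
Proof.
  intros s Hs. exists (1/4). split; [lra|].
  intros rho D Hper Hjet Hb01 Hbnd.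
  destruct s as [|n]; [lia|].
  assert (Jet := Hjet). destruct Jet as [J1 [J2 J3]].
  assert (Ckr : Ck (S n) rho).
  { eapply Ck_ext; [exact J1|]. apply (jet_Ck _ _ _ Hjet). lia. }
  assert (Cr : cont_strip rho) by exact (Ck_cont _ _ Ckr).
  assert (Pr : pd rho (D 1%nat 0%nat) (D 0%nat 1%nat)).
  { intros x y Hy. destruct (J3 0%nat 0%nat ltac:(lia) x y Hy) as [A B].
    split; [eapply pdx_ext|eapply pdy_ext]; eauto. }
  assert (Ca : Ck n (D 1%nat 0%nat)) by (apply (jet_Ck _ _ _ Hjet); lia).
  assert (Cb : Ck n (D 0%nat 1%nat)) by (apply (jet_Ck _ _ _ Hjet); lia).
  assert (Ba : forall x y, in01 y -> Rabs (D 1%nat 0%nat x y) <= 1/4) by (intros; apply Hbnd; auto; lia).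
  assert (Bb : forall x y, in01 y -> Rabs (D 0%nat 1%nat x y) <= 1/4) by (intros; apply Hbnd; auto; lia).
  assert (Bb2 : forall x y, in01 y -> Rabs (D 0%nat 1%nat x y) <= 1/2) by (intros; specialize (Bb x y H); lra).
  assert (Lip : forall u t1 t2, in01 t1 -> in01 t2 -> Rabs (rho u t1 - rho u t2) <= 1/4 * Rabs (t1 - t2)).
  { intros. apply (lip_y rho (D 1%nat 0%nat) (D 0%nat 1%nat)); auto. }
  assert (Lip' : forall u t1 t2, in01 t1 -> in01 t2 -> Rabs (- rho u t1 - - rho u t2) <= 1/4 * Rabs (t1 - t2)).
  { intros. replace (- rho u t1 - - rho u t2) with (- (rho u t1 - rho u t2)) by ring. rewrite Rabs_Ropp; auto. }
  assert (I0 : in01 0) by (unfold in01; lra). assert (I1 : in01 1) by (unfold in01; lra).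
  assert (Rb : forall x y, in01 y -> Rabs (rho x y) <= 1/4 * y /\ Rabs (rho x y) <= 1/4 * (1 - y)).
  { intros x y Hy. destruct (Hb01 x) as [E0 E1]. split.
    - pose proof (Lip x y 0 Hy I0). rewrite E0, Rminus_0_r, Rminus_0_r in H. rewrite (Rabs_pos_eq y) in H; auto. apply Hy.
    - pose proof (Lip x 1 y I1 Hy). rewrite E1, Rminus_0_l, Rabs_Ropp in H. rewrite (Rabs_pos_eq (1 - y)) in H; auto.
      unfold in01 in Hy; lra. }
  assert (Ic : forall x y, in01 y -> in01 (y + rho x y) /\ in01 (y - rho x y)).
  { intros x y Hy. destruct (Rb x y Hy) as [R1 R2]. unfold Rabs in *. destruct Rcase_abs; unfold in01 in *; lra. }
  set (X := fun x y => x + y + rho x y).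
  set (Xm := fun x y => x - y + rho x y).
  destruct (choice2 (fun x y t => in01 y -> in01 t /\ t = (y + rho x y) + rho (X x y) t)) as [T HT].
  { intros x y. destruct (classic (in01 y)) as [Hy|Hy].
    - destruct (fix_exists (fun t => rho (X x y) t) (y + rho x y)) as [t [Ht Et]]; auto.
      + apply Hb01. + apply Hb01. + apply Ic; auto.
      + exists t; auto.
    - exists 0; intros; contradiction. }
  destruct (choice2 (fun x y t => in01 y -> in01 t /\ t = (y - rho x y) + - rho (Xm x y) t)) as [Tm HTm].
  { intros x y. destruct (classic (in01 y)) as [Hy|Hy].
    - destruct (fix_exists (fun t => - rho (Xm x y) t) (y - rho x y)) as [t [Ht Et]]; auto.
      + rewrite (proj1 (Hb01 _)). ring. + rewrite (proj2 (Hb01 _)). ring. + apply Ic; auto.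
      + exists t; auto.
    - exists 0; intros; contradiction. }
  assert (U : forall u c t1 t2, in01 t1 -> in01 t2 -> t1 = c + rho u t1 -> t2 = c + rho u t2 -> t1 = t2).
  { intros u c t1 t2. apply (fix_unique (fun t => rho u t)). auto. }
  assert (Um : forall u c t1 t2, in01 t1 -> in01 t2 -> t1 = c + - rho u t1 -> t2 = c + - rho u t2 -> t1 = t2).
  { intros u c t1 t2. apply (fix_unique (fun t => - rho u t)). auto. }
  assert (PZ := per_Z rho Hper).
  assert (CkX : Ck (S n) X).
  { unfold X. apply Ck_plus; [apply Ck_plus; [apply Ck_fx|apply Ck_fy]|exact Ckr]. }
  assert (CkT : Ck (S n) T).
  { apply (implicit_Ck n (fun x y => y + rho x y) X rho (D 1%nat 0%nat) (D 0%nat 1%nat) T (1/4)); auto.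
    - apply Ck_plus; [apply Ck_fy|exact Ckr].
    - intros x y Hy; apply HT; auto.
    - intros x y Hy; apply HT; auto. }
  assert (TP : forall x y, in01 y -> T (x + 1) y = T x y).
  { intros x y Hy. destruct (HT (x + 1) y Hy) as [A1 A2]. destruct (HT x y Hy) as [B1 B2].
    apply (U (X x y) (y + rho x y)); auto.
    rewrite A2 at 1. unfold X at 1. rewrite Hper by auto.
    replace (x + 1 + y + rho x y) with (X x y + 1) by (unfold X; ring). rewrite Hper; auto. }
  assert (TmP : forall x y, in01 y -> Tm (x + 1) y = Tm x y).
  { intros x y Hy. destruct (HTm (x + 1) y Hy) as [A1 A2]. destruct (HTm x y Hy) as [B1 B2].
    apply (Um (Xm x y) (y - rho x y)); auto.
    rewrite A2 at 1. unfold Xm at 1. rewrite Hper by auto.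
    replace (x + 1 - y + rho x y) with (Xm x y + 1) by (unfold Xm; ring). rewrite Hper; auto. }
  exists (fun x y => (X x y, T x y)).
  assert (IsF : is_F (S n) rho (fun x y => (X x y, T x y))).
  { split; [split; [|split]|split].
    - intros x y Hy. simpl. split; [apply HT; auto|split; [|apply TP; auto]].
      exists 1%Z. unfold X. rewrite Hper by auto. simpl. ring.
    - apply Ck_Cs. exact CkX.
    - apply Ck_Cs. exact CkT.
    - intros x. split; simpl.
      + exists 0%Z. unfold X. rewrite (proj1 (Hb01 x)). simpl. ring.
      + destruct (HT x 0 I0) as [A1 A2]. apply (U (X x 0) (0 + rho x 0)); auto.
        rewrite (proj1 (Hb01 x)), (proj1 (Hb01 _)). ring.
    - intros x y Hy. simpl. split.
      + exists 0%Z. unfold X. simpl. ring.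
      + apply HT; auto. }
  split; [exact IsF|split; [|split]].
  - intros G [[GA _] [_ GE]] x y Hy. destruct (GE x y Hy) as [[k Hk] E2].
    destruct (GA x y Hy) as [GI _].
    split; simpl.
    + exists (- k)%Z. rewrite opp_IZR. unfold X. lra.
    + destruct (HT x y Hy) as [A1 A2]. apply (U (X x y) (y + rho x y)); auto.
      rewrite E2 at 1. replace (fst (G x y)) with (X x y + IZR k) by (unfold X; lra). rewrite PZ; auto.
  - intros x. split; simpl.
    + exists 1%Z. unfold X. rewrite (proj2 (Hb01 x)). simpl. ring.
    + destruct (HT x 1 I1) as [A1 A2]. apply (U (X x 1) (1 + rho x 1)); auto.
      rewrite (proj2 (Hb01 x)), (proj2 (Hb01 _)). ring.
  - exists (fun x y => (Xm x y, Tm x y)). split; [|split].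
    + intros x y Hy. simpl. split; [apply HTm; auto|split; [|apply TmP; auto]].
      exists 1%Z. unfold Xm. rewrite Hper by auto. simpl. ring.
    + intros x y Hy. simpl. destruct (HTm x y Hy) as [A1 A2]. destruct (HT x y Hy) as [B1 B2].
      split.
      * assert (EX : X (Xm x y) (Tm x y) = x) by (unfold X; unfold Xm in A2 |- *; lra).
        destruct (HT (Xm x y) (Tm x y) A1) as [C1 C2]. split; simpl.
        -- exists 0%Z. rewrite EX. simpl. ring.
        -- apply (U x (Tm x y + rho (Xm x y) (Tm x y))); auto.
           rewrite C2 at 1. rewrite EX. auto.
           unfold Xm in A2 |- *; lra.
      * assert (EX : Xm (X x y) (T x y) = x) by (unfold Xm; unfold X in B2 |- *; lra).
        destruct (HTm (X x y) (T x y) B1) as [C1 C2]. split; simpl.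
        -- exists 0%Z. rewrite EX. simpl. ring.
        -- apply (Um x (T x y - rho (X x y) (T x y))); auto.
           rewrite C2 at 1. rewrite EX. auto.
           unfold X in B2 |- *; lra.
    + intros x y Hy. simpl. destruct (HTm x y Hy) as [A1 A2]. split.
      * exists 0%Z. unfold Xm. simpl. ring.
      * rewrite A2 at 1. ring.
Qed.
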